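(* Let $\mathbf P=(P,\leq,{}',0,1)$ be a poset with complementation such that its Dedekind-MacNeille completion $\mathrm{DM}(\mathbf P)$ is an orthomodular lattice. Then $\mathbf P$ is pseudo-orthomodular.
   Context: For $M\subseteq P$, $U(M)$ and $L(M)$ are the sets of upper and lower bounds of $M$; $U(a,b)=U(\{a,b\})$ etc. A poset with complementation is a bounded poset with antitone involution $'$ ($x\le y\Rightarrow y'\le x'$, $x''=x$) with $L(x,x')=\{0\}$, $U(x,x')=\{1\}$. It is pseudo-orthomodular if $L(U(L(x,y),y'),y)=L(x,y)$ for all $x,y\in P$, equivalently $U(L(U(x,y),y'),y)=U(x,y)$. The Dedekind-MacNeille completion $\mathrm{DM}(\mathbf P)$ is the complete lattice of subsets $B\subseteq P$ with $L(U(B))=B$ ordered by inclusion, $P$ embedded via $x\mapsto L(\{x\})$, with the antitone involution $X'=L(\{u'\mid u\in X\})$. A lattice with complementation is orthomodular if $x\vee y=((x\vee y)\wedge y')\vee y$ for all $x,y$. *)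

(* Defs.v *)
Definition set (P : Type) := P -> Prop.

Definition seteq {P : Type} (A B : set P) : Prop := forall x, A x <-> B x.
Definition subset {P : Type} (A B : set P) : Prop := forall x, A x -> B x.
Definition setU {P : Type} (A B : set P) : set P := fun x => A x \/ B x.
Definition setI {P : Type} (A B : set P) : set P := fun x => A x /\ B x.
Definition set1 {P : Type} (a : P) : set P := fun x => x = a.
Definition set2 {P : Type} (a b : P) : set P := fun x => x = a \/ x = b.
Definition setT {P : Type} : set P := fun _ => True.

Section Bounds.
Context {P : Type} (le : P -> P -> Prop).
Definition Ub (M : set P) : set P := fun u => forall m, M m -> le m u.
Definition Lb (M : set P) : set P := fun l => forall m, M m -> le l m.
End Bounds.

Definition poset_with_complementation {P : Type} (le : P -> P -> Prop)
    (c : P -> P) (z o : P) : Prop :=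
  (forall x, le x x) /\
  (forall x y, le x y -> le y x -> x = y) /\
  (forall x y w, le x y -> le y w -> le x w) /\
  (forall x, le z x) /\ (forall x, le x o) /\
  (forall x y, le x y -> le (c y) (c x)) /\
  (forall x, c (c x) = x) /\
  (forall x, seteq (Lb le (set2 x (c x))) (set1 z)) /\
  (forall x, seteq (Ub le (set2 x (c x))) (set1 o)).

(* Pseudo-orthomodularity: L(U(L(x,y),y'),y) = L(x,y), where
   U(A,b) = U(A ∪ {b}). *)
Definition pseudo_orthomodular {P : Type} (le : P -> P -> Prop) (c : P -> P) : Prop :=
  forall x y : P,
    seteq (Lb le (setU (Ub le (setU (Lb le (set2 x y)) (set1 (c y)))) (set1 y)))
          (Lb le (set2 x y)).

(* Dedekind-MacNeille completion DM(P): the subsets B with L(U(B)) = B,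
   ordered by inclusion. *)
Section DM.
Context {P : Type} (le : P -> P -> Prop) (c : P -> P).

Definition DM_closed (B : set P) : Prop := seteq (Lb le (Ub le B)) B.
Definition DM_meet (A B : set P) : set P := setI A B.
Definition DM_join (A B : set P) : set P := Lb le (Ub le (setU A B)).
Definition DM_bot : set P := Lb le (Ub le (fun _ => False)).
Definition DM_top : set P := setT.
Definition DM_compl (X : set P) : set P := Lb le (fun v => exists u, X u /\ v = c u).

(* DM(P), with the involution ', is an orthomodular lattice:
   it is a lattice with complementation (X ∧ X' = 0, X ∨ X' = 1)
   satisfying X ∨ Y = ((X ∨ Y) ∧ Y') ∨ Y for all X, Y in DM(P).
   (The complete-lattice structure and the antitone involution are
   automatic for DM(P).) *)
Definition DM_orthomodular : Prop :=
  (forall X, DM_closed X -> seteq (DM_meet X (DM_compl X)) DM_bot) /\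
  (forall X, DM_closed X -> seteq (DM_join X (DM_compl X)) DM_top) /\
  (forall X Y, DM_closed X -> DM_closed Y ->
     seteq (DM_join X Y) (DM_join (DM_meet (DM_join X Y) (DM_compl Y)) Y)).
End DM.

(* Main.v *)
Require Import Defs.

Theorem theorem4 (P : Type) (le : P -> P -> Prop) (c : P -> P) (z o : P) :
  poset_with_complementation le c z o ->
  DM_orthomodular le c ->
  pseudo_orthomodular le c.
Proof.
  intros [Hr [Ha [Ht [_ [_ [Hc [Hcc _]]]]]]] [_ [_ Hom]] x y t.
  unfold Lb, Ub, setU, set2, set1. split.
  - intros H.
    assert (Hty : le t y) by (apply H; right; reflexivity).
    assert (Htx : le t x).
    { set (X := fun w => le w (c x)). set (Y := fun w => le w (c y)).
      assert (HX : DM_closed le X).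
      { intros w; split; intros Hw.
        - apply Hw. intros m Hm; exact Hm.
        - intros m Hm. apply Hm. exact Hw. }
      assert (HY : DM_closed le Y).
      { intros w; split; intros Hw.
        - apply Hw. intros m Hm; exact Hm.
        - intros m Hm. apply Hm. exact Hw. }
      pose proof (proj1 (Hom X Y HX HY (c x))) as K.
      assert (Hxin : DM_join le X Y (c x)).
      { intros m Hm. apply Hm. left. unfold X. apply Hr. }
      specialize (K Hxin).
      assert (Hle : le (c x) (c t)).
      { apply K. intros m [Hm | Hm].
        - destruct Hm as [Hm1 Hm2].
          assert (Hs : le t (c m)).
          { apply H. left. intros a [Ha' | Ha'].
            +
              assert (Ha1 : le a x) by (apply Ha'; left; reflexivity).
              assert (Ha2 : le a y) by (apply Ha'; right; reflexivity).
              assert (Hm3 : le m (c a)).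
              { apply Hm1. intros w [Hw | Hw].
                - unfold X in Hw. apply Ht with (c x); auto.
                - unfold Y in Hw. apply Ht with (c y); auto. }
              apply Hc in Hm3. rewrite Hcc in Hm3. exact Hm3.
            + subst a. 
              assert (Hmy : le m (c (c y))).
              { apply Hm2. exists (c y). split; [unfold Y; apply Hr | reflexivity]. }
              rewrite Hcc in Hmy. apply Hc; exact Hmy. }
          apply Hc in Hs. rewrite Hcc in Hs. exact Hs.
        - unfold Y in Hm. apply Ht with (c y); auto. }
      apply Hc in Hle. rewrite !Hcc in Hle. exact Hle. }
    intros m [Hm | Hm]; subst m; assumption.
  - intros H m [Hm | Hm].
    + apply Hm. left. exact H.
    + subst m. apply H. right. reflexivity.
Qed.
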